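(* In the discrete scheme described in the context, suppose that for some parcels $j_1,j_2\in\{1,\dots,n\}$ and some integer $k\ge0$ one has $\alpha_{k\delta t}(j_1)<\alpha_{k\delta t}(j_2)$ and $\alpha_{(k+1)\delta t}(j_1)>\alpha_{(k+1)\delta t}(j_2)$. Then $\theta^M_{j_1}>\theta^M_{j_2}$. In particular $\alpha_{l\delta t}(j_1)>\alpha_{l\delta t}(j_2)$ for all $l>k$.
   Context: $Q^{sat}:\mathbb{R}^3\to\mathbb{R}$ is smooth with $\partial_\theta Q^{sat}>0$, $\partial_zQ^{sat}<0$. $\Theta(w,z,t)$ is the solution $\theta$ of $\theta+Q^{sat}(\theta,z,t)=w$ (assumed well defined), with $\partial_w\Theta>0$, $\partial_z\Theta>0$. Discrete scheme. Fix $n\ge1$, $\delta t>0$, $z_i=i/n$. There are $n$ parcels $j=1,\dots,n$; initially parcel $j$ is at position $j$ with value $\theta^n_j$, where $\theta^n_1\le\dots\le\theta^n_n$ and $q^n_j\le Q^{sat}(\theta^n_j,z_j,0)$; parcel $j$ carries the fixed number $\theta^M_j=\theta^n_j+q^n_j$. One time step from $k\delta t$ to $(k+1)\delta t$, with $\tau=(k+1)\delta t$: positions $m=n,\dots,1$ are processed in this order. At stage $m$, with current configuration (parcel $p(i)$ at position $i$ with value $\vartheta_i$), position $i$ is wet if $\vartheta_i<\Theta(\theta^M_{p(i)},z_i,\tau)$; a wet position $i_0\le m$ is eligible if for every $i$ with $i_0<i\le m$, either $i$ is not wet and $\vartheta_i<\Theta(\theta^M_{p(i_0)},z_i,\tau)$,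 or $i$ is wet and $\theta^M_{p(i_0)}>\theta^M_{p(i)}$. If some position is eligible, let $i_*$ be the eligible position whose parcel has the largest $\theta^M$ (largest position in case of ties); that parcel moves to position $m$ with new value $\Theta(\theta^M_{p(i_* )},z_m,\tau)$, the parcels at $i_*+1,\dots,m$ move down one position keeping their values, others unchanged; otherwise nothing changes. After stage $1$ one has the configuration at time $(k+1)\delta t$. $\alpha_{k\delta t}(j)$ denotes the position of parcel $j$ after $k$ time steps ($\alpha_0=id$). *)

(* Defs.v *)
From Stdlib Require Import Reals Arith.
Open Scope R_scope.

(* A configuration of the discrete scheme: position i (1 <= i <= n) holds
   parcel [par c i] with current value [val c i].  Entries at positions
   outside 1..n are irrelevant. *)
Record config := mkConfig { par : nat -> nat ; val : nat -> R }.

Definition zpt (n i : nat) : R := INR i / INR n.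

Section Scheme.
Variables (n : nat) (Theta : R -> R -> R -> R) (thM : nat -> R) (tau : R).

Definition wet (c : config) (i : nat) : Prop :=
  val c i < Theta (thM (par c i)) (zpt n i) tau.

Definition eligible (c : config) (m i0 : nat) : Prop :=
  (1 <= i0 <= m)%nat /\ wet c i0 /\
  forall i, (i0 < i <= m)%nat ->
    (~ wet c i /\ val c i < Theta (thM (par c i0)) (zpt n i) tau)
    \/ (wet c i /\ thM (par c i0) > thM (par c i)).

Definition selected (c : config) (m is : nat) : Prop :=
  eligible c m is /\
  forall i, eligible c m i ->
    thM (par c i) <= thM (par c is) /\
    (thM (par c i) = thM (par c is) -> (i <= is)%nat).

(* parcel at i_* moves to position m with new value Theta(theta^M, z_m, tau);
   parcels at i_*+1..m move down by one keeping their values *)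
Definition move (c : config) (m is : nat) : config :=
  mkConfig
    (fun i => if Nat.eqb i m then par c is
              else if andb (Nat.leb is i) (Nat.ltb i m) then par c (S i)
              else par c i)
    (fun i => if Nat.eqb i m then Theta (thM (par c is)) (zpt n m) tau
              else if andb (Nat.leb is i) (Nat.ltb i m) then val c (S i)
              else val c i).

Definition stage (m : nat) (c c' : config) : Prop :=
  (exists is, selected c m is /\ c' = move c m is)
  \/ ((forall i, ~ eligible c m i) /\ c' = c).

Fixpoint stages (m : nat) (c c' : config) : Prop :=
  match m with
  | O => c' = c
  | S m' => exists c1, stage (S m') c c1 /\ stages m' c1 c'
  end.

Definition time_step (c c' : config) : Prop := stages n c c'.

End Scheme.

(* parcel j is at position i (1 <= i <= n) in configuration c,
   i.e. alpha(j) = i *)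
Definition at_pos (n : nat) (c : config) (j i : nat) : Prop :=
  (1 <= i <= n)%nat /\ par c i = j.

(* Main.v *)
Require Import Defs.
From Stdlib Require Import Reals Arith Lia Lra ClassicalEpsilon.
Open Scope R_scope.

Definition injc (n : nat) (c : config) : Prop :=
  forall i i', (1 <= i <= n)%nat -> (1 <= i' <= n)%nat -> par c i = par c i' -> i = i'.

Definition bwd (m is i : nat) : nat :=
  if Nat.eqb i m then is else if andb (Nat.leb is i) (Nat.ltb i m) then S i else i.

Definition fwd (m is i : nat) : nat :=
  if Nat.eqb i is then m else if andb (Nat.ltb is i) (Nat.leb i m) then pred i else i.

Lemma par_move n0 Th tM t c m is i : par (move n0 Th tM t c m is) i = par c (bwd m is i).
Proof. unfold move, bwd; simpl. destruct (Nat.eqb i m); auto.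
  destruct (andb _ _); auto. Qed.

Ltac crush := repeat match goal with
  | |- context [Nat.eqb ?a ?b] => destruct (Nat.eqb_spec a b)
  | |- context [Nat.leb ?a ?b] => destruct (Nat.leb_spec a b)
  | |- context [Nat.ltb ?a ?b] => destruct (Nat.ltb_spec a b)
  | H : context [Nat.eqb ?a ?b] |- _ => destruct (Nat.eqb_spec a b)
  | H : context [Nat.leb ?a ?b] |- _ => destruct (Nat.leb_spec a b)
  | H : context [Nat.ltb ?a ?b] |- _ => destruct (Nat.ltb_spec a b)
  end; simpl in *; try lia.

Lemma bwd_range n m is i : (1 <= is <= m)%nat -> (m <= n)%nat -> (1 <= i <= n)%nat ->
  (1 <= bwd m is i <= n)%nat.
Proof. intros; unfold bwd; crush. Qed.

Lemma bwd_inj m is i i' : (1 <= is <= m)%nat -> bwd m is i = bwd m is i' -> i = i'.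
Proof. intros; unfold bwd in *; crush. Qed.

Lemma par_fwd n0 Th tM t c m is i : (1 <= is <= m)%nat -> par (move n0 Th tM t c m is) (fwd m is i) = par c i.
Proof. intros; rewrite par_move; f_equal; unfold bwd, fwd; crush. Qed.

Lemma fwd_range n m is i : (1 <= is <= m)%nat -> (m <= n)%nat -> (1 <= i <= n)%nat ->
  (1 <= fwd m is i <= n)%nat.
Proof. intros; unfold fwd; crush. Qed.

Section S.
Variables (n : nat) (Theta : R -> R -> R -> R) (thM : nat -> R) (tau : R).

Lemma stage_inj m c c' : (m <= n)%nat -> stage n Theta thM tau m c c' -> injc n c -> injc n c'.
Proof.
  intros Hm [[is [[[Hr _] _] ->]] | [_ ->]] Hi; auto.
  intros i i' H1 H2 E. rewrite !par_move in E.
  apply (bwd_inj m is); auto. apply Hi; auto; apply (bwd_range n); auto; lia.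
Qed.

Lemma stages_inj m c c' : (m <= n)%nat -> stages n Theta thM tau m c c' -> injc n c -> injc n c'.
Proof.
  revert c; induction m; simpl; intros c Hm H Hi.
  - subst; auto.
  - destruct H as [c1 [H1 H2]]. apply (IHm c1); try lia; auto.
    apply (stage_inj (S m) c); auto.
Qed.

Lemma stages_back m c c' j b : (m <= n)%nat -> stages n Theta thM tau m c c' ->
  at_pos n c' j b -> exists a, at_pos n c j a.
Proof.
  revert c b; induction m; simpl; intros c b Hm H Hb.
  - subst; eauto.
  - destruct H as [c1 [H1 H2]]. destruct (IHm c1 b) as [a Ha]; try lia; auto.
    destruct H1 as [[is [[[Hr _] _] ->]] | [_ ->]]; eauto.
    exists (bwd (S m) is a). destruct Ha as [Ha E]. split.
    + apply (bwd_range n); auto; lia.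
    + rewrite <- (par_move n Theta thM tau); auto.
Qed.

Hypothesis Hmono : forall w1 w2 z t, w1 <= w2 -> Theta w1 z t <= Theta w2 z t.

Lemma stages_main m c c' j1 j2 a1 a2 b1 b2 : (m <= n)%nat ->
  stages n Theta thM tau m c c' -> injc n c ->
  at_pos n c j1 a1 -> at_pos n c j2 a2 -> (a1 < a2)%nat ->
  at_pos n c' j1 b1 -> at_pos n c' j2 b2 -> (b1 > b2)%nat ->
  thM j1 > thM j2.
Proof.
  revert c a1 a2; induction m; simpl; intros c a1 a2 Hm H Hi [Ha1 E1] [Ha2 E2] Ha Hb1 Hb2 Hb.
  - subst. destruct Hb1 as [Hb1 F1]. destruct Hb2 as [Hb2 F2].
    assert (a1 = b1) by (apply Hi; congruence).
    assert (a2 = b2) by (apply Hi; congruence). lia.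
  - destruct H as [c1 [H1 H2]].
    assert (Hi1 : injc n c1) by (apply (stage_inj (S m) c); auto).
    destruct H1 as [[is [[[Hr [Hw Hel]] _] ->]] | [_ ->]].
    2:{ apply (IHm c a1 a2); try lia; auto; split; auto. }
    assert (Hne : j1 <> j2) by (intro; subst; assert (a1 = a2) by (apply Hi; auto); lia).
    destruct (Nat.lt_ge_cases (fwd (S m) is a1) (fwd (S m) is a2)) as [Hl|Hl].
    + apply (IHm (move n Theta thM tau c (S m) is) (fwd (S m) is a1) (fwd (S m) is a2)); try lia; auto.
      * split. apply (fwd_range n); auto; lia. rewrite par_fwd; auto; lia.
      * split. apply (fwd_range n); auto; lia. rewrite par_fwd; auto; lia.
    + assert (Hf : fwd (S m) is a1 <> fwd (S m) is a2).
      { intro E. apply Hne. rewrite <- E1, <- E2, <- (par_fwd n Theta thM tau c (S m) is a1), <- (par_fwd n Theta thM tau c (S m) is a2); try lia.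
        rewrite E; auto. }
      assert (Hc : a1 = is /\ (is < a2 <= S m)%nat) by (unfold fwd in *; crush).
      destruct Hc as [-> Hc]. destruct (Hel a2 Hc) as [[Hnw Hv] | [_ Hv]].
      * rewrite E1 in Hv. unfold wet in Hnw. rewrite E2 in Hnw.
        destruct (Rle_lt_dec (thM j1) (thM j2)) as [Hle|Hlt]; auto.
        exfalso. apply Hnw. eapply Rlt_le_trans; [exact Hv|]. apply Hmono; auto.
      * rewrite E1, E2 in Hv; auto.
Qed.

End S.

Theorem lemma3p5
  (Qsat Theta : R -> R -> R -> R)
  (HQth : forall th z t, exists d, derivable_pt_lim (fun x => Qsat x z t) th d /\ 0 < d)
  (HQz : forall th z t, exists d, derivable_pt_lim (fun x => Qsat th x t) z d /\ d < 0)
  (HTheta : forall w z t, Theta w z t + Qsat (Theta w z t) z t = w)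
  (HThw : forall w z t, exists d, derivable_pt_lim (fun x => Theta x z t) w d /\ 0 < d)
  (HThz : forall w z t, exists d, derivable_pt_lim (fun x => Theta w x t) z d /\ 0 < d)
  (n : nat) (Hn : (1 <= n)%nat) (dt : R) (Hdt : 0 < dt)
  (thn q : nat -> R)
  (Hsort : forall j1 j2, (1 <= j1)%nat -> (j1 <= j2)%nat -> (j2 <= n)%nat -> thn j1 <= thn j2)
  (Hq : forall j, (1 <= j <= n)%nat -> q j <= Qsat (thn j) (zpt n j) 0)
  (C : nat -> config)
  (HC0 : forall i, (1 <= i <= n)%nat -> par (C 0%nat) i = i /\ val (C 0%nat) i = thn i)
  (HCstep : forall k, time_step n Theta (fun j => thn j + q j)
                        (INR (S k) * dt) (C k) (C (S k)))
  (j1 j2 k : nat) (Hj1 : (1 <= j1 <= n)%nat) (Hj2 : (1 <= j2 <= n)%nat)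
  (a1 a2 b1 b2 : nat)
  (Ha1 : at_pos n (C k) j1 a1) (Ha2 : at_pos n (C k) j2 a2) (Ha : (a1 < a2)%nat)
  (Hb1 : at_pos n (C (S k)) j1 b1) (Hb2 : at_pos n (C (S k)) j2 b2) (Hb : (b1 > b2)%nat) :
  thn j1 + q j1 > thn j2 + q j2 /\
  (forall l p1 p2, (l > k)%nat -> at_pos n (C l) j1 p1 -> at_pos n (C l) j2 p2 ->
     (p1 > p2)%nat).
Proof.
  assert (Hmono : forall w1 w2 z t, w1 <= w2 -> Theta w1 z t <= Theta w2 z t).
  { intros w1 w2 z t Hw. destruct (Req_dec w1 w2) as [->|Hne]; [lra|].
    set (f' := fun x => proj1_sig (constructive_indefinite_description _ (HThw x z t))).
    destruct (MVT_cor2 (fun x => Theta x z t) f' w1 w2) as [c0 [E _]]; [lra| |].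
    - intros c0 _. unfold f'. exact (proj1 (proj2_sig (constructive_indefinite_description _ (HThw c0 z t)))).
    - assert (0 < f' c0) by (unfold f'; exact (proj2 (proj2_sig (constructive_indefinite_description _ (HThw c0 z t))))).
      assert (0 <= f' c0 * (w2 - w1)) by (apply Rmult_le_pos; lra). lra. }
  assert (Hinj : forall k, injc n (C k)).
  { induction k0.
    - intros i i' H1 H2 E. rewrite (proj1 (HC0 i H1)), (proj1 (HC0 i' H2)) in E; auto.
    - apply (stages_inj n Theta (fun j => thn j + q j) (INR (S k0) * dt) n (C k0)); auto. apply HCstep. }
  assert (Key : forall k j1 j2 a1 a2 b1 b2,
    at_pos n (C k) j1 a1 -> at_pos n (C k) j2 a2 -> (a1 < a2)%nat ->
    at_pos n (C (S k)) j1 b1 -> at_pos n (C (S k)) j2 b2 -> (b1 > b2)%nat ->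
    thn j1 + q j1 > thn j2 + q j2).
  { intros. eapply (stages_main n Theta (fun j => thn j + q j) _ Hmono n (C k0)); try apply HCstep; eauto. }
  split. { exact (Key k j1 j2 a1 a2 b1 b2 Ha1 Ha2 Ha Hb1 Hb2 Hb). }
  intros l p1 p2 Hl. revert p1 p2. induction Hl as [|l Hl IH]; intros p1 p2 Hp1 Hp2.
  - assert (p1 = b1) by (apply (Hinj (S k)); [apply Hp1|apply Hb1|destruct Hp1, Hb1; congruence]).
    assert (p2 = b2) by (apply (Hinj (S k)); [apply Hp2|apply Hb2|destruct Hp2, Hb2; congruence]).
    lia.
  - destruct (stages_back n Theta (fun j => thn j + q j) _ n (C l) (C (S l)) j1 p1 (le_n _) (HCstep l) Hp1) as [q1 Hq1].
    destruct (stages_back n Theta (fun j => thn j + q j) _ n (C l) (C (S l)) j2 p2 (le_n _) (HCstep l) Hp2) as [q2 Hq2].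
    specialize (IH q1 q2 Hq1 Hq2).
    destruct (Nat.lt_total p1 p2) as [H|[H|H]]; auto.
    + exfalso. assert (thn j2 + q j2 > thn j1 + q j1) by exact (Key l j2 j1 q2 q1 p2 p1 Hq2 Hq1 IH Hp2 Hp1 H).
      assert (thn j1 + q j1 > thn j2 + q j2) by exact (Key k j1 j2 a1 a2 b1 b2 Ha1 Ha2 Ha Hb1 Hb2 Hb). lra.
    + subst. destruct Hp1 as [Hr F1], Hp2 as [_ F2].
      assert (j1 = j2) by congruence. subst.
      assert (q1 = q2) by (apply (Hinj l); auto; [apply Hq1|apply Hq2|destruct Hq1, Hq2; congruence]). lia.
Qed.
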